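(* Assume the sparsity setting below with $1<p\le2$. Let $(c^\ast,s^\ast)\in X\times Y$, $u^\ast=B(c^\ast,s^\ast)$, let $c^\ast$ be a $\Phi_p$-minimizing solution, and let $u_\delta\in Z$, $s_{\mathrm{mod},\epsilon}\in Y$ with $\|u^\ast-u_\delta\|\le\delta$, $\|s^\ast-s_{\mathrm{mod},\epsilon}\|\le\epsilon$. Assume the source condition: there is $\omega\in Z$ with $(\xi_{c^\ast},\xi_{s^\ast})=B'(c^\ast,s^\ast)^\ast\omega$ for some $(\xi_{c^\ast},\xi_{s^\ast})=:\xi^\ast\in\partial\tilde{\mathcal{R}}(c^\ast,s^\ast)$, where $B'(c^\ast,s^\ast)(x,y)=B(c^\ast,y)+B(x,s^\ast)$; and the smallness condition $C\|\omega\|<\min\{1,\gamma/(2\alpha_{\max})\}$ for some $0<\alpha_{\max}<\infty$. For $0<\alpha\le\alpha_{\max}$ let $(c^\alpha,s^\alpha)$ be a minimizer of $J^{u_\delta,s_{\mathrm{mod},\epsilon}}_{\alpha,\nu_1\alpha,\nu_2\alpha}$. If $\alpha\sim\delta+\epsilon$ (i.e., $m(\delta+\epsilon)\le\alpha\le M(\delta+\epsilon)$ for constants $0<m\le M$), then as $\delta+\epsilon\to0$ $$\|B(c^\alpha,s^\alpha)-B(c^\ast,s^\ast)\|=\mathcal{O}(\delta+\epsilon),\qquad D^{\xi^\ast}_{\tilde{\mathcal{R}}}((c^\alpha,s^\alpha),(c^\ast,s^\ast))=\mathcal{O}(\delta+\epsilon).$$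
   Context: Sparsity setting: $X,Y,Z$ are Hilbert spaces; $X\times Y$ carries the inner product $\langle (c_1,s_1),(c_2,s_2)\rangle=\langle c_1,c_2\rangle_X+\langle s_1,s_2\rangle_Y$. $B:X\times Y\to Z$ is bilinear, satisfies $\|B(c,s)\|_Z\le C\|c\|_X\|s\|_Y$ for some $C>0$, and is sequentially weak-weak continuous. $Y_n\subset Y$ is a finite-dimensional subspace, $P:Y\to Y_n$ is linear and bounded, $s_{\mathrm{calib}}\in Y_n$. $\mathcal{R}_s:Y\to[0,\infty)$ is proper, convex and weakly lower semi-continuous. $\{\varphi_i\}_{i\in\mathbb{N}}$ is an orthonormal basis of $X$, weights satisfy $1\le w_i<\infty$, and $\Phi_p(c)=\sum_iw_i|\langle c,\varphi_i\rangle|^p$. Fix $\gamma>0$ and $\nu_1,\nu_2\in(0,\infty)$. For $u\in Z$, $s_m\in Y$, $\alpha,\beta,\mu>0$: $J^{u,s_m}_{\alpha,\beta,\mu}(c,s)=\frac12\|B(c,s)-u\|^2+\frac{\gamma}{2}\|s-s_m\|^2+\frac{\mu}{2}\|P(s)-s_{\mathrm{calib}}\|^2+\alpha\Phi_p(c)+\beta\mathcal{R}_s(s)$, and $\tilde{\mathcal{R}}(c,s)=\Phi_p(c)+\frac{\nu_2}{2}\|P(s)-s_{\mathrm{calib}}\|^2+\nu_1\mathcal{R}_s(s)$ (so $J^{u,s_m}_{\alpha,\nu_1\alpha,\nu_2\alpha}=\frac12\|B(c,s)-u\|^2+\frac\gamma2\|s-s_m\|^2+\alpha\tilde{\mathcal{R}}$).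 $c^\ast$ is a $\Phi_p$-minimizing solution if $c^\ast\in\arg\min\{\Phi_p(c):B(c,s^\ast)=u^\ast\}$. For a convex functional $\mathcal{R}$ and $\xi\in\partial\mathcal{R}(x^\ast)$, $D^{\xi}_{\mathcal{R}}(x,x^\ast)=\mathcal{R}(x)-\mathcal{R}(x^\ast)-\langle\xi,x-x^\ast\rangle$. *)

(* Defs.v *)
From HB Require Import structures.
From mathcomp Require Import all_boot all_order all_algebra.
From mathcomp Require Import all_classical all_reals all_analysis.
Set Implicit Arguments. Unset Strict Implicit. Unset Printing Implicit Defensive.
Import Order.TTheory GRing.Theory Num.Theory.
Import numFieldNormedType.Exports.
Local Open Scope classical_set_scope.
Local Open Scope ring_scope.

Section Defs.
Variable R : realType.

(* A real Hilbert space: a complete normed space whose norm comes from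
   the inner product [ip] (symmetric, linear in the first argument). *)
Definition is_inner_product (X : completeNormedModType R) (ip : X -> X -> R) : Prop :=
  [/\ (forall x y, ip x y = ip y x),
      (forall (a : R) x y z, ip (a *: x + y) z = a * ip x z + ip y z)
    & (forall x, ip x x = `|x| ^+ 2)].

Definition weak_cvg (X : completeNormedModType R) (ip : X -> X -> R)
    (x : nat -> X) (l : X) : Prop :=
  forall v : X, (fun n => ip (x n) v) @ \oo --> ip l v.

Definition bilinear_map (X Y Z : completeNormedModType R) (B : X -> Y -> Z) : Prop :=
  (forall (a : R) c1 c2 s, B (a *: c1 + c2) s = a *: B c1 s + B c2 s) /\
  (forall (a : R) c s1 s2, B c (a *: s1 + s2) = a *: B c s1 + B c s2).

(* sequentially weak-weak continuous, weak convergence in X x Y being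
   componentwise weak convergence (for the product inner product) *)
Definition seq_weak_weak_continuous (X Y Z : completeNormedModType R)
    (ipX : X -> X -> R) (ipY : Y -> Y -> R) (ipZ : Z -> Z -> R)
    (B : X -> Y -> Z) : Prop :=
  forall (c : nat -> X) (s : nat -> Y) (c0 : X) (s0 : Y),
    weak_cvg ipX c c0 -> weak_cvg ipY s s0 ->
    weak_cvg ipZ (fun n => B (c n) (s n)) (B c0 s0).

Definition findim_subspace (Y : completeNormedModType R) (Yn : set Y) : Prop :=
  exists (n : nat) (e : 'I_n -> Y),
    Yn = [set y | exists a : 'I_n -> R, y = \sum_(i < n) a i *: e i].

Definition linear_map (Y : completeNormedModType R) (P : Y -> Y) : Prop :=
  forall (a : R) x y, P (a *: x + y) = a *: P x + P y.

Definition bounded_map (Y : completeNormedModType R) (P : Y -> Y) : Prop :=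
  exists K : R, forall y, `|P y| <= K * `|y|.

Definition convex_fun (Y : completeNormedModType R) (f : Y -> R) : Prop :=
  forall (t : R) x y, 0 <= t <= 1 ->
    f (t *: x + (1 - t) *: y) <= t * f x + (1 - t) * f y.

Definition weakly_lsc (Y : completeNormedModType R) (ipY : Y -> Y -> R)
    (f : Y -> R) : Prop :=
  forall (y : nat -> Y) (y0 : Y), weak_cvg ipY y y0 ->
    ((f y0)%:E <= limn_einf (fun n => (f (y n))%:E))%E.

Definition orthonormal_basis (X : completeNormedModType R) (ipX : X -> X -> R)
    (phi : nat -> X) : Prop :=
  (forall i j, ipX (phi i) (phi j) = (i == j)%:R) /\
  (forall x, (forall i, ipX x (phi i) = 0) -> x = 0).

Definition Phi_p (X : completeNormedModType R) (ipX : X -> X -> R)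
    (phi : nat -> X) (w : nat -> R) (p : R) (c : X) : \bar R :=
  (\sum_(0 <= i <oo) ((w i * (`|ipX c (phi i)| `^ p))%:E))%E.

Definition Jfun (X Y Z : completeNormedModType R) (ipX : X -> X -> R)
    (B : X -> Y -> Z) (gamma : R) (P : Y -> Y) (scal : Y) (Rs : Y -> R)
    (phi : nat -> X) (w : nat -> R) (p : R)
    (u : Z) (sm : Y) (alpha beta mu : R) (c : X) (s : Y) : \bar R :=
  ((2^-1 * `|B c s - u| ^+ 2 + gamma / 2 * `|s - sm| ^+ 2
    + mu / 2 * `|P s - scal| ^+ 2 + beta * Rs s)%:E
   + alpha%:E * Phi_p ipX phi w p c)%E.

Definition Rtilde (X Y : completeNormedModType R) (ipX : X -> X -> R)
    (P : Y -> Y) (scal : Y) (Rs : Y -> R)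
    (phi : nat -> X) (w : nat -> R) (p nu1 nu2 : R) (c : X) (s : Y) : \bar R :=
  (Phi_p ipX phi w p c + (nu2 / 2 * `|P s - scal| ^+ 2 + nu1 * Rs s)%:E)%E.

(* (xic, xis) is in the subdifferential at (c0,s0) of a convex functional
   F : X x Y -> (-oo,+oo] (w.r.t. the product inner product); as usual the
   subdifferential is empty where F is not finite. *)
Definition in_subdiff (X Y : completeNormedModType R) (ipX : X -> X -> R)
    (ipY : Y -> Y -> R) (F : X -> Y -> \bar R) (c0 : X) (s0 : Y)
    (xic : X) (xis : Y) : Prop :=
  F c0 s0 \is a fin_num /\
  forall c s, (F c0 s0 + (ipX xic (c - c0) + ipY xis (s - s0))%:E <= F c s)%E.

Definition bregman (X Y : completeNormedModType R) (ipX : X -> X -> R)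
    (ipY : Y -> Y -> R) (F : X -> Y -> \bar R) (xic : X) (xis : Y)
    (c : X) (s : Y) (c0 : X) (s0 : Y) : \bar R :=
  (F c s - F c0 s0 - (ipX xic (c - c0) + ipY xis (s - s0))%:E)%E.

End Defs.

(* Main.v *)
Require Import Defs.
From HB Require Import structures.
From mathcomp Require Import all_boot all_order all_algebra.
From mathcomp Require Import all_classical all_reals all_analysis.
From mathcomp Require Import ring lra zify.
Import Order.TTheory GRing.Theory Num.Theory.
Import numFieldNormedType.Exports.
Local Open Scope classical_set_scope.
Local Open Scope ring_scope.

Section IP.
Context (R : realType) (X : completeNormedModType R) (ip : X -> X -> R)
  (h : is_inner_product ip).

Lemma ipC x y : ip x y = ip y x.
Proof. by case: h. Qed.
Lemma ipxx x : ip x x = `|x| ^+ 2.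
Proof. by case: h. Qed.
Lemma ipZDl a x y z : ip (a *: x + y) z = a * ip x z + ip y z.
Proof. by case: h. Qed.
Lemma ip0l z : ip 0 z = 0.
Proof.
have := ipZDl 1 0 0 z; rewrite scaler0 addr0 mul1r => e; lra.
Qed.
Lemma ipDl x y z : ip (x + y) z = ip x z + ip y z.
Proof. by rewrite -[x]scale1r ipZDl mul1r scale1r. Qed.
Lemma ipZl a x z : ip (a *: x) z = a * ip x z.
Proof. by rewrite -[a *: x]addr0 ipZDl ip0l addr0. Qed.
Lemma ipNl x z : ip (- x) z = - ip x z.
Proof. by rewrite -scaleN1r ipZl mulN1r. Qed.
Lemma ipBl x y z : ip (x - y) z = ip x z - ip y z.
Proof. by rewrite ipDl ipNl. Qed.
Lemma ipDr x y z : ip z (x + y) = ip z x + ip z y.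
Proof. by rewrite ipC ipDl !(ipC z). Qed.
Lemma ipZr a x z : ip z (a *: x) = a * ip z x.
Proof. by rewrite ipC ipZl ipC. Qed.
Lemma ipBr x y z : ip z (x - y) = ip z x - ip z y.
Proof. by rewrite ipC ipBl !(ipC z). Qed.
Lemma ip0r z : ip z 0 = 0.
Proof. by rewrite ipC ip0l. Qed.

Lemma normDZ a b x y :
  `|a *: x + b *: y| ^+ 2 = a ^+ 2 * `|x| ^+ 2 + 2 * a * b * ip x y + b ^+ 2 * `|y| ^+ 2.
Proof.
rewrite -ipxx ipDl !ipDr !ipZl !ipZr -!ipxx (ipC y x). ring.
Qed.

Lemma ip_CS x y : `|ip x y| <= `|x| * `|y|.
Proof.
have [y0|yn0] := eqVneq y 0; first by rewrite y0 ip0r !normr0 mulr0.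
have [x0|xn0] := eqVneq x 0; first by rewrite x0 ip0l !normr0 mul0r.
have ky : 0 < `|y| by rewrite normr_gt0.
have kx : 0 < `|x| by rewrite normr_gt0.
have h1 := normDZ `|y| (- `|x|) x y.
have h2 := normDZ `|y| `|x| x y.
have e1 := sqr_ge0 `|(`|y| *: x + (- `|x|) *: y)|.
have e2 := sqr_ge0 `|(`|y| *: x + `|x| *: y)|.
have kxy : 0 < `|x| * `|y| by rewrite mulr_gt0.
have k2 : 0 < 2 * (`|x| * `|y|) by rewrite mulr_gt0.
rewrite ler_norml; apply/andP; split.
- rewrite -subr_ge0 opprK.
  have H : 0 <= 2 * (`|x| * `|y|) * (`|x| * `|y| + ip x y) by nra.
  by move: H; rewrite pmulr_rge0 // => H; lra.
- rewrite -subr_ge0.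
  have H : 0 <= 2 * (`|x| * `|y|) * (`|x| * `|y| - ip x y) by nra.
  by move: H; rewrite pmulr_rge0 // => H; lra.
Qed.
Context (phi : nat -> X) (hphi : orthonormal_basis ip phi).

Lemma ip_suml (F : nat -> X) m n z :
  ip (\sum_(m <= k < n) F k) z = \sum_(m <= k < n) ip (F k) z.
Proof.
elim/big_rec2: _ => [|i y1 y2 _ <-]; first by rewrite ip0l.
by rewrite ipDl.
Qed.

Lemma onb_ip i j : ip (phi i) (phi j) = (i == j)%:R.
Proof. by case: hphi. Qed.

Lemma ip_partial (a : nat -> R) n j :
  ip (\sum_(0 <= k < n) a k *: phi k) (phi j) = if (j < n)%N then a j else 0.
Proof.
elim: n => [|n IH]; first by rewrite big_geq // ip0l.
rewrite big_nat_recr //= ipDl. rewrite IH ipZl onb_ip.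
case: (ltngtP j n) => [jn|nj|->].
- have -> : (j < n.+1)%N = true by lia.
  by rewrite mulr0 addr0.
- have -> : (j < n.+1)%N = false by lia.
  by rewrite mulr0 addr0.
- by rewrite ltnSn mulr1 add0r.
Qed.

Lemma norm_partial (a : nat -> R) m n : (m <= n)%N ->
  `|\sum_(m <= k < n) a k *: phi k| ^+ 2 = \sum_(m <= k < n) a k ^+ 2.
Proof.
elim: n => [|n IH]; first by rewrite leqn0 => /eqP ->; rewrite !big_geq // normr0 expr0n.
rewrite leq_eqVlt => /orP [/eqP ->|]; first by rewrite !big_geq // normr0 expr0n.
rewrite ltnS => mn.
rewrite !big_nat_recr //=.
rewrite (_ : forall u v : X, `|u + v| ^+ 2 = `|u| ^+ 2 + 2 * ip u v + `|v| ^+ 2); last first.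
  by move=> u v; have := normDZ 1 1 u v; rewrite !scale1r => ->; ring.
rewrite IH // ipZr ip_suml.
have -> : \sum_(m <= k < n) ip (a k *: phi k) (phi n) = 0.
  rewrite big_nat_cond big1 //.
  by move=> k /andP[/andP[_ kn] _]; rewrite ipZl onb_ip (ltn_eqF kn) mulr0.
rewrite -ipxx ipZl ipZr onb_ip eqxx /= mulr1; ring.
Qed.

Lemma onb_phi_norm j : `|phi j| = 1.
Proof.
have := ipxx (phi j); rewrite onb_ip eqxx /= => e.
have n0 := normr_ge0 (phi j). nra.
Qed.

Lemma onb_bound (c : X) (S : R) :
  (forall n, \sum_(0 <= i < n) ip c (phi i) ^+ 2 <= S) -> `|c| <= S + 2.
Proof.
move=> hS.
pose a i := ip c (phi i).
pose u i := a i *: phi i.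
have S0 : 0 <= S by have := hS 0%N; rewrite big_geq.
have ra : cvgn (series (fun i => a i ^+ 2)).
  apply: nondecreasing_is_cvgn.
    apply/nondecreasing_seqP => n; rewrite /series /= big_nat_recr //= lerDl.
    exact: sqr_ge0.
  by exists S => _ [n _ <-]; exact: hS.
have cr : cauchy (series (fun i => a i ^+ 2) @ \oo) by apply: cvg_cauchy.

have {}cr := (cauchy_seriesP _).1 cr.
have cv : cauchy (series u @ \oo).
  apply: (cauchy_seriesP u).2 => e e0.
  have := cr (e ^+ 2) (exprn_gt0 2 e0).
  apply: filterS => -[n1 n2] /=.
  case: (leqP n1 n2) => hn.
    rewrite -(norm_partial a n1 n2 hn) => H.
    have H2 := ler_norm (`|\sum_(n1 <= k < n2) a k *: phi k| ^+ 2).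
    have z0 := normr_ge0 (\sum_(n1 <= k < n2) a k *: phi k).
    rewrite /u; nra.
  by move=> _; rewrite big_geq ?normr0 ?(ltnW hn).
have cvu : cvgn (series u) by apply/cauchy_cvgP.
set v := limn (series u) in cvu.
have close : forall e, 0 < e -> exists N, forall n, (N <= n)%N -> `|v - series u n| < e.
  move=> e e0; have := (cvgrPdist_lt _ _).1 cvu e e0.
  by case=> N _ HN; exists N => n Nn; exact: HN.
have ipv : forall j, ip v (phi j) = a j.
  move=> j.
  suff H : forall e, 0 < e -> `|ip v (phi j) - a j| < e.
    apply/eqP; rewrite -subr_eq0 -normr_le0.
    rewrite leNgt; apply/negP => H0.
    have := H _ H0; rewrite ltxx //.
  move=> e e0; have [N HN] := close e e0.
  have := HN (maxn N j.+1) (leq_maxl _ _).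
  have jn : (j < maxn N j.+1)%N by rewrite leq_max ltnSn orbT.
  have e1 : ip (series u (maxn N j.+1)) (phi j) = a j.
    by rewrite /series /= /u ip_partial jn.
  have e2 := ip_CS (v - series u (maxn N j.+1)) (phi j).
  rewrite ipBl e1 onb_phi_norm mulr1 in e2.
  move=> H; exact: (le_lt_trans e2 H).
have cv_eq : c = v.
  apply/eqP; rewrite -subr_eq0; apply/eqP.
  by case: hphi => _; apply => i; rewrite ipBl ipv subrr.
have [N HN] := close 1 ltr01.
have h1 := HN N (leqnn N).
have h2 : `|series u N| ^+ 2 <= S.
  by rewrite /series /= /u norm_partial.
have h3 : `|v| <= `|v - series u N| + `|series u N|.
  by rewrite -[X in `|X|](subrK (series u N)) ler_normD.
have z0 := normr_ge0 (series u N).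
rewrite cv_eq; nra.
Qed.
End IP.

Lemma phi_partial (R : realType) (X : completeNormedModType R) (ip : X -> X -> R)
  (phi : nat -> X) (w : nat -> R) (p : R) (hw : forall i, 1 <= w i) c n :
  ((\sum_(0 <= i < n) w i * `|ip c (phi i)| `^ p)%:E <= Phi_p ip phi w p c)%E.
Proof.
rewrite -sumEFin /Phi_p.
have := @nneseries_lim_ge R (fun i => (w i * `|ip c (phi i)| `^ p)%:E) xpredT 0%N n.
rewrite big_mkcond /=. apply.
move=> k _ _; rewrite lee_fin mulr_ge0 ?powR_ge0 //.
exact: le_trans ler01 (hw k).
Qed.

Lemma Phi_ge0 (R : realType) (X : completeNormedModType R) (ip : X -> X -> R)
  (phi : nat -> X) (w : nat -> R) (p : R) (hw : forall i, 1 <= w i) c :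
  (0 <= Phi_p ip phi w p c)%E.
Proof.
have := @phi_partial _ _ ip phi w p hw c 0; rewrite big_geq //.
Qed.

Lemma coef_bound (R : realType) (X : completeNormedModType R) (ip : X -> X -> R)
  (phi : nat -> X) (w : nat -> R) (p : R) (hw : forall i, 1 <= w i)
  (hp : 1 < p <= 2) c r :
  (Phi_p ip phi w p c <= r%:E)%E ->
  forall n, \sum_(0 <= i < n) ip c (phi i) ^+ 2 <= (1 + r) * r.
Proof.
move=> hr.
pose t i := w i * `|ip c (phi i)| `^ p.
have t0 : forall i, 0 <= t i.
  by move=> i; rewrite mulr_ge0 ?powR_ge0 //; exact: le_trans ler01 (hw i).
have ts : forall n, \sum_(0 <= i < n) t i <= r.
  move=> n; have := le_trans (@phi_partial _ _ ip phi w p hw c n) hr.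
  by rewrite lee_fin.
have r0 : 0 <= r by have := ts 0%N; rewrite big_geq.
have tr : forall i, t i <= r.
  move=> i; apply: le_trans (ts i.+1).
  rewrite big_nat_recr //= lerDr; apply: sumr_ge0 => k _; exact: t0.
have pt : forall i, ip c (phi i) ^+ 2 <= (1 + r) * t i.
  move=> i.
  set z := `|ip c (phi i)|.
  have z0 : 0 <= z by exact: normr_ge0.
  have -> : ip c (phi i) ^+ 2 = z ^+ 2 by rewrite /z real_normK // num_real.
  have qt : z `^ p <= t i.
    rewrite /t -/z ler_peMl ?powR_ge0 //.
  have w1 := hw i.
  have q0 : 0 <= z `^ p by exact: powR_ge0.
  case: (lerP z 1) => z1.
  - have zq : z ^+ 2 <= z `^ p.
      have [->|zn0] := eqVneq z 0; first by rewrite expr0n /= powR_ge0.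
      have zp : 0 < z by rewrite lt_def zn0 z0.
      rewrite -powR_mulrn //; apply: ger_powR; first by rewrite zp z1.
      by case/andP: hp.
    have := tr i. nra.
  - have zq : z <= z `^ p.
      rewrite -{1}(powRr1 z0); apply: ler_powR; first exact: ltW.
      by case/andP: hp => /ltW.
    have := tr i. nra.
move=> n.
have H1 : \sum_(0 <= i < n) ip c (phi i) ^+ 2 <= \sum_(0 <= i < n) (1 + r) * t i.
  by apply: ler_sum_nat => i _; exact: pt.
rewrite -mulr_sumr in H1.
have := ts n. nra.
Qed.

Lemma le_of_sq (R : realType) (a c : R) : 0 <= c -> a ^+ 2 <= c ^+ 2 -> a <= c.
Proof. move=> c0 h; rewrite leNgt; apply/negP => H. nra. Qed.

Lemma BBl (R : realType) (X Y Z : completeNormedModType R) (B : X -> Y -> Z)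
  (hB : bilinear_map B) c1 c2 s : B (c1 - c2) s = B c1 s - B c2 s.
Proof. by have := hB.1 (-1) c2 c1 s; rewrite scaleN1r addrC => ->; rewrite scaleN1r addrC. Qed.

Lemma BBr (R : realType) (X Y Z : completeNormedModType R) (B : X -> Y -> Z)
  (hB : bilinear_map B) c s1 s2 : B c (s1 - s2) = B c s1 - B c s2.
Proof. by have := hB.2 (-1) c s2 s1; rewrite scaleN1r addrC => ->; rewrite scaleN1r addrC. Qed.

Lemma fin_ge0 (R : realType) (e : \bar R) (y : R) :
  (0 <= e)%E -> (e + y%:E)%E \is a fin_num -> exists r, e = r%:E /\ 0 <= r.
Proof.
case: e => [r| |] //= h0 _; by exists r; split => //; rewrite -lee_fin.
Qed.
Theorem mainTheorem9 (R : realType)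
  (X Y Z : completeNormedModType R)
  (ipX : X -> X -> R) (ipY : Y -> Y -> R) (ipZ : Z -> Z -> R)
  (hX : is_inner_product ipX) (hY : is_inner_product ipY) (hZ : is_inner_product ipZ)
  (B : X -> Y -> Z) (C : R)
  (hB : bilinear_map B) (hC : 0 < C)
  (hBC : forall c s, `|B c s| <= C * `|c| * `|s|)
  (hBw : seq_weak_weak_continuous ipX ipY ipZ B)
  (Yn : set Y) (P : Y -> Y) (scal : Y)
  (hYn : findim_subspace Yn) (hPlin : linear_map P) (hPbd : bounded_map P)
  (hPrange : forall y, Yn (P y)) (hscal : Yn scal)
  (Rs : Y -> R) (hRs0 : forall y, 0 <= Rs y) (hRsc : convex_fun Rs)
  (hRslsc : weakly_lsc ipY Rs)
  (phi : nat -> X) (hphi : orthonormal_basis ipX phi)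
  (w : nat -> R) (hw : forall i, 1 <= w i)
  (p gamma nu1 nu2 : R) (hp : 1 < p <= 2) (hgamma : 0 < gamma)
  (hnu1 : 0 < nu1) (hnu2 : 0 < nu2)
  (cs : X) (ss : Y)
  (hmin : forall c, B c ss = B cs ss ->
     (Phi_p ipX phi w p cs <= Phi_p ipX phi w p c)%E)
  (omega : Z) (xic : X) (xis : Y)
  (hxi : in_subdiff ipX ipY (Rtilde ipX P scal Rs phi w p nu1 nu2) cs ss xic xis)
  (hsrc_c : forall x, ipX xic x = ipZ omega (B x ss))
  (hsrc_s : forall y, ipY xis y = ipZ omega (B cs y))
  (alpha_max : R) (halpha_max : 0 < alpha_max)
  (hsmall : C * `|omega| < Num.min 1 (gamma / (2 * alpha_max)))
  (m M : R) (hm : 0 < m) (hmM : m <= M) :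
  exists K : R, exists2 eta : R, 0 < eta &
    forall (delta eps : R) (udelta : Z) (smod : Y) (alpha : R) (ca : X) (sa : Y),
      0 <= delta -> 0 <= eps -> delta + eps < eta ->
      `|B cs ss - udelta| <= delta -> `|ss - smod| <= eps ->
      0 < alpha -> alpha <= alpha_max ->
      m * (delta + eps) <= alpha <= M * (delta + eps) ->
      (forall c s, (Jfun ipX B gamma P scal Rs phi w p udelta smod
                      alpha (nu1 * alpha) (nu2 * alpha) ca sa
                    <= Jfun ipX B gamma P scal Rs phi w p udelta smod
                      alpha (nu1 * alpha) (nu2 * alpha) c s)%E) ->
      `|B ca sa - B cs ss| <= K * (delta + eps) /\
      (bregman ipX ipY (Rtilde ipX P scal Rs phi w p nu1 nu2) xic xis ca sa cs ss
         <= (K * (delta + eps))%:E)%E.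
Proof.
Proof.
case: hxi => hfin hsub.
have Phi0 := @Phi_ge0 R X ipX phi w p hw.
set Gf := fun s : Y => nu2 / 2 * `|P s - scal| ^+ 2 + nu1 * Rs s.
have G0 : forall s, 0 <= Gf s.
  move=> s; rewrite /Gf.
  have h1 : 0 <= nu2 / 2 by rewrite divr_ge0 // ltW.
  have h2 : 0 <= `|P s - scal| ^+ 2 by rewrite exprn_ge0.
  have h3 := hRs0 s.
  nra.
have [phis [Hphis phis0]] : exists r, Phi_p ipX phi w p cs = r%:E /\ 0 <= r.
  by apply: (@fin_ge0 _ _ _ (Phi0 cs)); exact: hfin.
set r0 := phis + Gf ss.
set r1 := r0 + (1 + gamma) / (2 * m).
set K1 := (1 + r1) * r1 + 2.
set K2 := K1 + `|cs|.
set u := `|omega|.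
set k := C * K2.
set Q := 2^-1 + gamma / 2 + M ^+ 2 * u ^+ 2 + M * u + M ^+ 2 * u ^+ 2 * k ^+ 2 / gamma + M * u * k.
exists (2 + 4 * Q + Q / m); exists 1; first exact: ltr01.
move=> delta eps ud sm alpha ca sa d0 e0 heta hud hsm a0 amax /andP[am aM] hJ.
have M0 : 0 < M by exact: lt_le_trans hm hmM.
have hpos : 0 < delta + eps by nra.
have J1 := hJ cs ss.
rewrite /Jfun Hphis in J1.
have [phia [Hphia phia0]] : exists r, Phi_p ipX phi w p ca = r%:E /\ 0 <= r.
  move: J1; case E: (Phi_p ipX phi w p ca) => [r| |] J1.
  - by exists r; split => //; rewrite -lee_fin -E Phi0.
  - move: J1; rewrite mulry gtr0_sg // mul1e -EFinM -EFinD.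
    by rewrite addey.
  - by have := Phi0 ca; rewrite E.
rewrite Hphia -!EFinM -!EFinD lee_fin in J1.
have S1 := hsub ca sa.
rewrite /Rtilde Hphis Hphia -!EFinD lee_fin in S1.
rewrite /bregman /Rtilde Hphis Hphia -!EFinD lee_fin.
rewrite -/(Gf sa) -/(Gf ss) in S1 *.
have JA : 2^-1 * `|B ca sa - ud| ^+ 2 + gamma / 2 * `|sa - sm| ^+ 2 + alpha * (phia + Gf sa)
    <= 2^-1 * `|B cs ss - ud| ^+ 2 + gamma / 2 * `|ss - sm| ^+ 2 + alpha * (phis + Gf ss).
  move: J1; rewrite /Gf; lra.
set L := ipX xic (ca - cs) + ipY xis (sa - ss) in S1 *.
set D := phia + Gf sa - (phis + Gf ss) - L.
have D0 : 0 <= D by rewrite /D; lra.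
set h := delta + eps in hpos heta am aM *.
set a := `|B ca sa - ud| in JA.
set b := `|sa - sm| in JA.
set d := `|B cs ss - ud| in JA hud.
set e := `|ss - sm| in JA hsm.
have a_0 : 0 <= a := normr_ge0 _.
have b_0 : 0 <= b := normr_ge0 _.
have d_0 : 0 <= d := normr_ge0 _.
have e_0 : 0 <= e := normr_ge0 _.
have Ga0 := G0 sa.
have gm : 2 * m * ((1 + gamma) / (2 * m)) = 1 + gamma.
  by field; rewrite gt_eqF.
have dh : delta <= h by rewrite /h; lra.
have eh : eps <= h by rewrite /h; lra.
have hphia : phia <= r1.
  have h1 : 2^-1 * d ^+ 2 + gamma / 2 * e ^+ 2 <= (1 + gamma) / 2 * h ^+ 2.
    have : d ^+ 2 <= h ^+ 2 by nra.
    have : e ^+ 2 <= h ^+ 2 by nra.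
    nra.
  have h2 : (1 + gamma) / 2 * h ^+ 2 <= alpha * ((1 + gamma) / (2 * m)).
    set im := (1 + gamma) / (2 * m) in gm *.
    have i0 : 0 <= im by rewrite /im divr_ge0 // ?mulr_ge0 // ltW // addr_gt0.
    have q1 : m * h * im <= alpha * im := ler_wpM2r i0 am.
    have q2 : m * h * im = (1 + gamma) / 2 * h.
      have -> : m * h * im = (2 * m * im) * h / 2 by field.
      by rewrite gm; field.
    have q3 : h ^+ 2 <= h by nra.
    have q4 : 0 <= (1 + gamma) / 2 by rewrite divr_ge0 // addr_ge0 // ltW.
    nra.
  have h3 : alpha * phia <= alpha * r1.
    rewrite /r1 /r0. have := sqr_ge0 a. have := sqr_ge0 b. nra.
  by rewrite -(ler_pM2l a0).
have hca : `|ca| <= K1.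
  apply: (@onb_bound R X ipX hX phi hphi ca ((1 + r1) * r1)).
  apply: (@coef_bound R X ipX phi w p hw hp ca r1).
  by rewrite Hphia lee_fin.
have hx : `|ca - cs| <= K2 := le_trans (ler_normB _ _) (lerD hca (lexx _)).
have hy : `|sa - ss| <= b + e.
  by have := ler_distD sm sa ss; rewrite (distrC sm ss).
have hBn : `|B ca sa - B cs ss| <= a + d.
  by have := ler_distD ud (B ca sa) (B cs ss); rewrite (distrC ud).
have eL : L = ipZ omega (B ca sa - B cs ss) - ipZ omega (B (ca - cs) (sa - ss)).
  rewrite /L hsrc_c hsrc_s !(@BBl _ _ _ _ B hB) !(@BBr _ _ _ _ B hB) !(@ipBr _ _ _ hZ).
  lra.
have CS1 := @ip_CS _ _ _ hZ omega (B ca sa - B cs ss).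
have CS2 := @ip_CS _ _ _ hZ omega (B (ca - cs) (sa - ss)).
have hBC' := hBC (ca - cs) (sa - ss).
rewrite ler_norml in CS1; case/andP: CS1 => CS1a CS1b.
rewrite ler_norml in CS2; case/andP: CS2 => CS2a CS2b.
set nx := `|ca - cs| in hx hBC'.
set ny := `|sa - ss| in hy hBC'.
set nV := `|B ca sa - B cs ss| in hBn CS1a CS1b *.
set nW := `|B (ca - cs) (sa - ss)| in CS2a CS2b hBC'.
set V := ipZ omega (B ca sa - B cs ss) in eL CS1a CS1b.
set W := ipZ omega (B (ca - cs) (sa - ss)) in eL CS2a CS2b.
rewrite -/u in CS1a CS1b CS2a CS2b.
have u0 : 0 <= u := normr_ge0 _.
have nx0 : 0 <= nx := normr_ge0 _.
have ny0 : 0 <= ny := normr_ge0 _.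
have K20 : 0 <= K2 by exact: le_trans nx0 hx.
have k0 : 0 <= k by rewrite /k mulr_ge0 // ltW.
have nyb : ny <= b + eps by lra.
have nxy : nx * ny <= K2 * (b + eps) by apply: ler_pM.
have hW : W <= u * k * (b + eps).
  have q1 : nW <= k * (b + eps).
    apply: le_trans hBC' _; rewrite /k -mulrA -mulrA ler_wpM2l //; exact: ltW.
  have q2 : u * nW <= u * (k * (b + eps)) by apply: ler_wpM2l.
  rewrite mulrA in q2; lra.
have hV : - V <= u * (a + delta).
  have q1 : u * nV <= u * (a + delta) by apply: ler_wpM2l => //; lra.
  lra.
have negL : - L <= u * (a + delta) + u * k * (b + eps) by rewrite eL; lra.
have main1 : 2^-1 * a ^+ 2 + gamma / 2 * b ^+ 2 + alpha * D
    <= 2^-1 * delta ^+ 2 + gamma / 2 * eps ^+ 2 + alpha * u * (a + delta) + alpha * u * k * (b + eps).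
  have q1 : d ^+ 2 <= delta ^+ 2 by rewrite !expr2; apply: ler_pM.
  have q2 : e ^+ 2 <= eps ^+ 2 by rewrite !expr2; apply: ler_pM.
  have q3 : alpha * (- L) <= alpha * (u * (a + delta) + u * k * (b + eps)) by rewrite ler_pM2l.
  have q4 : alpha * (phia + Gf sa) = alpha * D + alpha * (phis + Gf ss) + alpha * L.
    by rewrite /D; ring.
  have q5 : 0 <= gamma / 2 by rewrite divr_ge0 // ltW.
  have q6 : gamma / 2 * e ^+ 2 <= gamma / 2 * eps ^+ 2 by apply: ler_wpM2l.
  lra.
have ig : gamma * gamma^-1 = 1 by rewrite mulfV // gt_eqF.
have s3 : alpha * u * a <= a ^+ 2 / 4 + alpha ^+ 2 * u ^+ 2.
  have := sqr_ge0 (a / 2 - alpha * u).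
  have -> : (a / 2 - alpha * u) ^+ 2 = a ^+ 2 / 4 + alpha ^+ 2 * u ^+ 2 - alpha * u * a by field.
  lra.
have s4 : alpha * u * k * b <= gamma / 4 * b ^+ 2 + (alpha * u * k) ^+ 2 * gamma^-1.
  have := sqr_ge0 (gamma * b / 2 - alpha * u * k).
  have -> : (gamma * b / 2 - alpha * u * k) ^+ 2 =
     gamma * (gamma / 4 * b ^+ 2 + (alpha * u * k) ^+ 2 * gamma^-1 - alpha * u * k * b).
    by field; rewrite gt_eqF.
  by rewrite pmulr_rge0 // subr_ge0.
have g'0 : 0 <= gamma^-1 by rewrite invr_ge0 ltW.
have h0 : 0 <= h := ltW hpos.
have al0 : 0 <= alpha := ltW a0.
have dd : delta ^+ 2 <= h ^+ 2 by rewrite !expr2; apply: ler_pM.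
have ee : eps ^+ 2 <= h ^+ 2 by rewrite !expr2; apply: ler_pM.
have ee' : gamma / 2 * eps ^+ 2 <= gamma / 2 * h ^+ 2.
  by apply: ler_wpM2l => //; rewrite divr_ge0 // ltW.
have aa : alpha ^+ 2 <= (M * h) ^+ 2 by rewrite !expr2; apply: ler_pM.
have t1 : alpha ^+ 2 * u ^+ 2 <= (M * h) ^+ 2 * u ^+ 2.
  by apply: ler_wpM2r => //; exact: sqr_ge0.
have t2 : (alpha * u) * delta <= (M * h * u) * h.
  apply: ler_pM => //; first exact: mulr_ge0.
  by apply: ler_wpM2r.
have t3 : alpha ^+ 2 * (u ^+ 2 * k ^+ 2 * gamma^-1) <= (M * h) ^+ 2 * (u ^+ 2 * k ^+ 2 * gamma^-1).
  apply: ler_wpM2r => //.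
  have := sqr_ge0 u; have := sqr_ge0 k => ? ?.
  by apply: mulr_ge0 => //; apply: mulr_ge0.
have t4 : (alpha * (u * k)) * eps <= (M * h * (u * k)) * h.
  have uk : 0 <= u * k by apply: mulr_ge0.
  apply: ler_pM => //; first by apply: mulr_ge0.
  by apply: ler_wpM2r.
have fin : a ^+ 2 / 4 + gamma / 4 * b ^+ 2 + alpha * D <= Q * h ^+ 2.
  have e3 : (alpha * u * k) ^+ 2 * gamma^-1 = alpha ^+ 2 * (u ^+ 2 * k ^+ 2 * gamma^-1) by ring.
  rewrite /Q. lra.
have gb : 0 <= gamma / 4 * b ^+ 2 by rewrite mulr_ge0 ?sqr_ge0 // divr_ge0 // ltW.
have aD : 0 <= alpha * D by rewrite mulr_ge0.
have a2 : 0 <= a ^+ 2 := sqr_ge0 a.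
have Q0 : 0 <= Q.
  have H : 0 <= Q * h ^+ 2 by lra.
  by move: H; rewrite pmulr_lge0 // exprn_gt0.
have aQ : a <= (1 + 4 * Q) * h.
  apply: le_of_sq; first by rewrite mulr_ge0 // addr_ge0 // mulr_ge0.
  have : 0 <= h ^+ 2 * (1 + 4 * Q + 16 * Q ^+ 2).
    by rewrite mulr_ge0 ?sqr_ge0 // !addr_ge0 // mulr_ge0 // sqr_ge0.
  have -> : ((1 + 4 * Q) * h) ^+ 2 = 4 * Q * h ^+ 2 + h ^+ 2 * (1 + 4 * Q + 16 * Q ^+ 2) by ring.
  lra.
have DQ : D <= Q / m * h.
  have q1 : (m * h) * D <= alpha * D by apply: ler_wpM2r.
  have q2 : (m * D) * h <= (Q * h) * h.
    have -> : (m * D) * h = (m * h) * D by ring.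
    have -> : (Q * h) * h = Q * h ^+ 2 by ring.
    lra.
  rewrite ler_pM2r // in q2.
  have -> : Q / m * h = (Q * h) / m by rewrite mulrAC.
  by rewrite ler_pdivlMr // mulrC.
have Qm0 : 0 <= Q / m * h by rewrite mulr_ge0 // divr_ge0 // ltW.
have Kh : (2 + 4 * Q + Q / m) * h = (2 + 4 * Q) * h + Q / m * h by ring.
have Kh2 : 0 <= (2 + 4 * Q) * h by rewrite mulr_ge0 // addr_ge0 // mulr_ge0.
split.
- rewrite Kh; have : (1 + 4 * Q) * h + h = (2 + 4 * Q) * h by ring. lra.
- rewrite -/D Kh; lra.
Qed.
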